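(* Let $E$ be a Banach lattice. Then the norm topology and the unbounded norm topology on $E$ are both locally interval complete solidly submetrisable.
   Context: All vector lattices are real and Archimedean; linear topologies are Hausdorff. A locally solid topology on a vector lattice is a linear topology such that zero has a neighbourhood basis of solid sets. For a Banach lattice $E$ with norm topology $\tau$, the unbounded norm topology (un-topology) is the locally solid topology on $E$ having as neighbourhood basis at zero the sets $\{x\in E: \| |x|\wedge|y| \|<\varepsilon\}$ for $\varepsilon>0$ and $y\in E$. For $x\in E$, $B_x$ denotes the band generated by $x$. A locally solid topology $\tau$ on $E$ is locally interval complete solidly submetrisable if for every $x\in E^+$ there exists a metrisable locally solid topology $\widetilde\tau_x$ on $B_x$ such that (a) $\tau|_{B_x}$ is finer than $\widetilde\tau_x$, and (b) every $\widetilde\tau_x$-Cauchy sequence in $[0,x]$ is $\widetilde\tau_x$-convergent to an element of $[0,x]$. *)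

(* Defs.v *)
From HB Require Import structures.
From mathcomp Require Import all_boot all_order all_algebra.
From mathcomp Require Import all_classical all_reals all_analysis.
Set Implicit Arguments. Unset Strict Implicit. Unset Printing Implicit Defensive.
Import Order.TTheory GRing.Theory Num.Theory.
Import numFieldNormedType.Exports.
Local Open Scope classical_set_scope.
Local Open Scope ring_scope.

Section BanachLattice.
Variables (R : realType) (E : completeNormedModType R).
Variables (le : E -> E -> Prop) (sup : E -> E -> E).

Definition inf (x y : E) : E := - sup (- x) (- y).
Definition labs (x : E) : E := sup x (- x).

Record is_vector_lattice : Prop := {
  vl_refl : forall x, le x x;
  vl_antisym : forall x y, le x y -> le y x -> x = y;
  vl_trans : forall x y z, le x y -> le y z -> le x z;
  vl_add : forall x y z, le x y -> le (x + z) (y + z);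
  vl_scale : forall (a : R) x y, 0 <= a -> le x y -> le (a *: x) (a *: y);
  vl_sup_l : forall x y, le x (sup x y);
  vl_sup_r : forall x y, le y (sup x y);
  vl_sup_least : forall x y z, le x z -> le y z -> le (sup x y) z;
  vl_archimedean : forall x y, (forall n : nat, le (n%:R *: x) y) -> le x 0
}.

(* Banach lattice: complete normed space (given by the type of E) whose norm
   is a lattice norm. *)
Record is_banach_lattice : Prop := {
  bl_vl : is_vector_lattice;
  bl_norm : forall x y : E, le (labs x) (labs y) -> `|x| <= `|y|
}.

Definition is_sup_of (D : set E) (s : E) : Prop :=
  (forall d, D d -> le d s) /\ (forall z, (forall d, D d -> le d z) -> le s z).

Definition solid_in (B A : set E) : Prop :=
  forall x y, A x -> B y -> le (labs y) (labs x) -> A y.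

Definition is_ideal (B : set E) : Prop :=
  [/\ B 0, (forall x y, B x -> B y -> B (x + y)),
      (forall (a : R) x, B x -> B (a *: x)) & solid_in setT B].

Definition is_band (B : set E) : Prop :=
  is_ideal B /\ (forall D s, D `<=` B -> is_sup_of D s -> B s).

Definition band_gen (x : E) : set E :=
  [set y | forall B, is_band B -> B x -> B y].

Definition order_interval (a b : E) : set E := [set y | le a y /\ le y b].

(* Linear topologies on a linear subspace B of E are represented by their
   filter N of zero-neighbourhoods (subsets of B). *)
Definition is_locally_solid_on (B : set E) (N : set (set E)) : Prop :=
  [/\ (forall U, N U -> U `<=` B),
      N B,
      (forall U V, N U -> U `<=` V -> V `<=` B -> N V) &
      (forall U V, N U -> N V -> N (U `&` V))] /\
  [/\ (forall U, N U -> forall x, B x ->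
          exists2 e : R, 0 < e & forall a : R, `|a| <= e -> U (a *: x)),
      (forall U, N U -> exists2 V, N V & forall a b, V a -> V b -> U (a + b)),
      (forall U, N U -> exists2 V, N V & V `<=` U /\ solid_in B V) &
      (forall x, B x -> (forall U, N U -> U x) -> x = 0)].

Definition restr_finer (B : set E) (N N' : set (set E)) : Prop :=
  forall V, N' V -> exists2 U, N U & U `&` B `<=` V.

(* Metrisability of the linear topology N on B: some metric on B induces the
   same neighbourhoods at every point of B (neighbourhoods of p are p + U). *)
Definition metrisable_on (B : set E) (N : set (set E)) : Prop :=
  exists d : E -> E -> R,
    [/\ (forall x y, B x -> B y -> 0 <= d x y),
        (forall x y, B x -> B y -> (d x y = 0 <-> x = y)),
        (forall x y, B x -> B y -> d x y = d y x) &
        (forall x y z, B x -> B y -> B z -> d x z <= d x y + d y z)] /\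
    [/\ (forall p, B p -> forall U, N U -> exists2 e : R, 0 < e &
            forall q, B q -> d p q < e -> U (q - p)) &
        (forall p, B p -> forall e : R, 0 < e -> exists2 U, N U &
            forall q, B q -> U (q - p) -> d p q < e)].

Definition cauchy_wrt (N : set (set E)) (u : nat -> E) : Prop :=
  forall U, N U -> exists n0, forall m n, (n0 <= m)%N -> (n0 <= n)%N -> U (u m - u n).

Definition converges_wrt (N : set (set E)) (u : nat -> E) (l : E) : Prop :=
  forall U, N U -> exists n0, forall n, (n0 <= n)%N -> U (u n - l).

Definition licss (N : set (set E)) : Prop :=
  forall x, le 0 x -> exists N' : set (set E),
    [/\ is_locally_solid_on (band_gen x) N',
        metrisable_on (band_gen x) N',
        restr_finer (band_gen x) N N' &
        (forall u : nat -> E, (forall n, order_interval 0 x (u n)) ->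
           cauchy_wrt N' u ->
           exists2 l, order_interval 0 x l & converges_wrt N' u l)].

Definition norm_nbhs0 : set (set E) := [set U | nbhs (0 : E) U].

Definition un_nbhs0 : set (set E) :=
  [set U | exists e : R, exists y : E, 0 < e /\
     [set x | `| inf (labs x) (labs y) | < e] `<=` U].

End BanachLattice.

(* Main.v *)
Require Import Defs.
From HB Require Import structures.
From mathcomp Require Import all_boot all_order all_algebra.
From mathcomp Require Import all_classical all_reals all_analysis.
From mathcomp Require Import lra.
Set Implicit Arguments. Unset Strict Implicit. Unset Printing Implicit Defensive.
Import Order.TTheory GRing.Theory Num.Theory.
Import numFieldNormedType.Exports.
Local Open Scope classical_set_scope.
Local Open Scope ring_scope.


Lemma cauchy_lim (R : realType) (E : completeNormedModType R) (u : nat -> E) :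
  (forall e : R, 0 < e -> exists n0, forall m n, (n0 <= m)%N -> (n0 <= n)%N -> `|u m - u n| < e) ->
  exists l, forall e : R, 0 < e -> exists n0, forall n, (n0 <= n)%N -> `|l - u n| < e.
Proof.
move=> hc.
have cu : cauchy (u @ \oo).
  apply: cauchy_exP => e e0; have [n0 hn0] := hc e e0.
  exists (u n0); exists n0 => // n /= hn; rewrite -ball_normE /=.
  exact: hn0.
have hcv : cvgn u by apply: cauchy_cvg.
have hl := proj1 (cvgrPdist_lt _ _) hcv.
exists (limn u) => e e0; have [n0 _ h] := hl _ e e0.
by exists n0 => n hn; apply: h.
Qed.

Lemma small0 (R : realType) (r : R) : 0 <= r -> (forall e, 0 < e -> r < e) -> r = 0.
Proof.
move=> r0 h; apply/eqP; rewrite eq_le r0 andbT; apply/negP => /negP.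
rewrite -ltNge => rp; have := h (r / 2) (divr_gt0 rp (ltr0Sn _ 1)). lra.
Qed.


Unset Implicit Arguments.
Section Lat.
Variables (R : realType) (E : completeNormedModType R).
Variables (le : E -> E -> Prop) (sup : E -> E -> E).
Hypothesis H : is_vector_lattice le sup.
Implicit Types (a b c d x y z p q t s u v w : E).

Local Notation inf := (Defs.inf sup).
Local Notation labs := (labs sup).

Lemma tt3 a b : a + (-a - b) = -b.
Proof. by rewrite addrA subrr add0r. Qed.
Lemma lrefl x : le x x. Proof. exact: (vl_refl H). Qed.
Lemma lanti x y : le x y -> le y x -> x = y. Proof. exact: (vl_antisym H). Qed.
Lemma ltr x y z : le x y -> le y z -> le x z. Proof. exact: (vl_trans H). Qed.
Lemma laddr x y z : le x y -> le (x + z) (y + z). Proof. exact: (vl_add H). Qed.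
Lemma laddl x y z : le x y -> le (z + x) (z + y).
Proof. by move=> h; rewrite ![z + _]addrC; apply: laddr. Qed.
Lemma laddrP x y z : le (x + z) (y + z) -> le x y.
Proof. by move=> /(laddr _ _ (-z)); rewrite !addrK. Qed.
Lemma lD a b c d : le a b -> le c d -> le (a + c) (b + d).
Proof. by move=> h1 h2; apply: ltr (laddr _ _ _ h1) (laddl _ _ _ h2). Qed.
Lemma tt4 a b : a + (-a - b) = -b.
Proof. by rewrite addrA subrr add0r. Qed.
Lemma lN a b : le a b -> le (- b) (- a).
Proof.
move=> hab; move: (laddr _ _ (- a + - b) hab).
by rewrite addrA subrr add0r addrCA subrr addr0.
Qed.
Lemma lNP a b : le (- b) (- a) -> le a b.
Proof. by move=> /lN; rewrite !opprK. Qed.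
Lemma lsub0 x y : le x y -> le 0 (y - x).
Proof. by move=> /(laddr _ _ (-x)); rewrite subrr. Qed.
Lemma lsub0P x y : le 0 (y - x) -> le x y.
Proof. by move=> /(laddr _ _ x); rewrite add0r subrK. Qed.

Lemma supl x y : le x (sup x y). Proof. exact: (vl_sup_l H). Qed.
Lemma supr x y : le y (sup x y). Proof. exact: (vl_sup_r H). Qed.
Lemma supP x y z : le x z -> le y z -> le (sup x y) z. Proof. exact: (vl_sup_least H). Qed.
Lemma supC x y : sup x y = sup y x.
Proof. by apply: lanti; apply: supP; [apply: supr|apply: supl|apply: supr|apply: supl]. Qed.
Lemma sup_id x y : le x y -> sup x y = y.
Proof. by move=> h; apply: lanti; [apply: supP => //; apply: lrefl | apply: supr]. Qed.
Lemma sup_mono a b c d : le a b -> le c d -> le (sup a c) (sup b d).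
Proof. by move=> h1 h2; apply: supP; [apply: ltr h1 (supl _ _)|apply: ltr h2 (supr _ _)]. Qed.
Lemma supD x y z : sup (x + z) (y + z) = sup x y + z.
Proof.
apply: lanti.
  by apply: supP; apply: laddr; [apply: supl|apply: supr].
apply: (laddrP _ _ (-z)); rewrite addrK; apply: supP.
  by have := laddr _ _ (-z) (supl (x + z) (y + z)); rewrite addrK.
by have := laddr _ _ (-z) (supr (x + z) (y + z)); rewrite addrK.
Qed.

Lemma infl x y : le (inf x y) x.
Proof. by apply: lNP; rewrite /Defs.inf opprK; apply: supl. Qed.
Lemma infr x y : le (inf x y) y.
Proof. by apply: lNP; rewrite /Defs.inf opprK; apply: supr. Qed.
Lemma infP x y z : le z x -> le z y -> le z (inf x y).
Proof.
move=> h1 h2; apply: lNP; rewrite /Defs.inf opprK.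
by apply: supP; apply: lN.
Qed.
Lemma infC x y : inf x y = inf y x.
Proof. by rewrite /Defs.inf supC. Qed.
Lemma inf_id x y : le x y -> inf x y = x.
Proof. by move=> h; apply: lanti; [apply: infl|apply: infP => //; apply: lrefl]. Qed.
Lemma inf_mono a b c d : le a b -> le c d -> le (inf a c) (inf b d).
Proof. by move=> h1 h2; apply: infP; [apply: ltr (infl _ _) h1|apply: ltr (infr _ _) h2]. Qed.
Lemma inf_sup x y : inf x y = x + y - sup x y.
Proof.
have := supD (- x) (- y) (x + y).
rewrite addrA addNr add0r addrCA addNr addr0 supC => h.
by rewrite /Defs.inf h opprD addrCA subrr addr0.
Qed.
Lemma infD x y z : inf (x + z) (y + z) = inf x y + z.
Proof.
rewrite /Defs.inf !opprD supD opprD opprK.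
by [].
Qed.


Lemma lscale (a : R) x y : 0 <= a -> le x y -> le (a *: x) (a *: y).
Proof. exact: (vl_scale H). Qed.
Lemma lhalf p : le 0 (p + p) -> le 0 p.
Proof.
move=> h; have := lscale (2^-1) 0 (p + p) _ h.
rewrite scaler0 scalerDr -scalerDl -[(2^-1 : R)]mul1r -splitr scale1r.
by apply; rewrite divr_ge0 ?ler0n.
Qed.
Lemma labs_ge w : le w (labs w). Proof. exact: supl. Qed.
Lemma labs_geN w : le (- w) (labs w). Proof. exact: supr. Qed.
Lemma labs_ge0 w : le 0 (labs w).
Proof. by apply: lhalf; have := lD _ _ _ _ (labs_ge w) (labs_geN w); rewrite subrr. Qed.
Lemma labs_pos p : le 0 p -> labs p = p.
Proof.
move=> h; rewrite /Defs.labs supC; apply: sup_id; apply: (ltr _ 0) => //.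
by have := lN _ _ h; rewrite oppr0.
Qed.
Lemma labsN w : labs (- w) = labs w.
Proof. by rewrite /Defs.labs opprK supC. Qed.
Lemma labsD a b : le (labs (a + b)) (labs a + labs b).
Proof.
apply: supP; first exact: lD (labs_ge a) (labs_ge b).
by rewrite opprD; apply: lD (labs_geN a) (labs_geN b).
Qed.
Lemma labs_le0 w : le (labs w) 0 -> w = 0.
Proof.
move=> h; apply: lanti; first exact: ltr (labs_ge w) h.
by apply: lNP; rewrite oppr0; apply: ltr (labs_geN w) h.
Qed.
Lemma lsand u : le 0 u -> le u 0 -> u = 0.
Proof. by move=> h1 h2; apply: lanti. Qed.

Lemma sup_scale (a : R) x y : 0 <= a -> sup (a *: x) (a *: y) = a *: sup x y.
Proof.
move=> a0; apply: lanti.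
  by apply: supP; apply: lscale => //; [apply: supl|apply: supr].
have [->|an0] := eqVneq a 0.
  by rewrite !scale0r; apply: supl.
have a'0 : 0 <= a^-1 by rewrite invr_ge0.
have K w : a *: (a^-1 *: w) = w by rewrite scalerA mulfV // scale1r.
rewrite -[X in le _ X]K; apply: lscale => //.
apply: supP.
  have Kx : x = a^-1 *: (a *: x) by rewrite scalerA mulVf // scale1r.
  by rewrite {1}Kx; apply: lscale => //; apply: supl.
have Ky : y = a^-1 *: (a *: y) by rewrite scalerA mulVf // scale1r.
by rewrite {1}Ky; apply: lscale => //; apply: supr.
Qed.
Lemma labs_scale (a : R) w : labs (a *: w) = `|a| *: labs w.
Proof.
have P (b : R) : 0 <= b -> labs (b *: w) = b *: labs w.
  by move=> b0; rewrite /Defs.labs -scalerN sup_scale.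
have [a0|a0] := leP 0 a; first by rewrite ger0_norm // P.
rewrite ltr0_norm // -labsN -scaleNr P // oppr_ge0 ltW //.
Qed.
Lemma inf_scale (a : R) x y : 0 <= a -> inf (a *: x) (a *: y) = a *: inf x y.
Proof. by move=> a0; rewrite /Defs.inf -!scalerN sup_scale // scalerN. Qed.

Lemma inf_ge0 p t : le 0 p -> le 0 t -> le 0 (inf p t).
Proof. by move=> hp ht; apply: infP. Qed.
Lemma laddpos t p : le 0 p -> le t (t + p).
Proof. by move=> h; have := laddl _ _ t h; rewrite addr0. Qed.
Lemma inf_subadd p q t : le 0 p -> le 0 q -> le 0 t ->
  le (inf (p + q) t) (inf p t + inf q t).
Proof.
move=> hp hq ht; set X := inf (p + q) t.
have XT : le X t by apply: infr.
rewrite -infD; apply: infP.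
  rewrite addrC -infD; apply: infP; first by rewrite addrC; apply: infl.
  by apply: ltr XT _; apply: laddpos.
rewrite addrC -infD; apply: infP; apply: ltr XT _; rewrite addrC; by apply: laddpos.
Qed.
Lemma inf_scale0 (c : R) p t : 0 <= c -> le 0 p -> le 0 t -> inf p t = 0 ->
  inf (c *: p) t = 0.
Proof.
move=> c0 hp ht h0; apply: lsand; first by apply: inf_ge0 => //; 
  have := lscale _ _ _ c0 hp; rewrite scaler0.
have [c1|c1] := leP c 1.
  rewrite -h0; apply: inf_mono; last exact: lrefl.
  apply: lsub0P; rewrite -{1}[p]scale1r -scalerBl.
  by have := lscale _ _ _ (_ : 0 <= 1 - c) hp; rewrite scaler0; apply; rewrite subr_ge0.
apply: ltr (inf_mono _ _ _ _ (lrefl (c *: p)) (_ : le t (c *: t))) _.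
  apply: lsub0P; rewrite -[X in _ - X]scale1r -scalerBl.
  by have := lscale _ _ _ (_ : 0 <= c - 1) ht; rewrite scaler0; apply; rewrite subr_ge0 ltW.
by rewrite inf_scale // h0 scaler0; apply: lrefl.
Qed.

Lemma lsubl0 a b : le a b -> le (a - b) 0.
Proof. by move=> h; have := laddr _ _ (- b) h; rewrite subrr. Qed.
Lemma eqle a b : a = b -> le a b.
Proof. by move=> ->; apply: lrefl. Qed.

Definition perp t := [set w | inf (labs w) t = 0].

Lemma perp_band t : le 0 t -> is_band le sup (perp t).
Proof.
move=> ht; split; [split|].
- by rewrite /perp /= labs_pos ?inf_id //; apply: lrefl.
- move=> x y hx hy; apply: lsand; first exact: inf_ge0 (labs_ge0 _) ht.
  apply: ltr (inf_mono _ _ _ _ (labsD x y) (lrefl t)) _.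
  apply: ltr (inf_subadd _ _ _ (labs_ge0 x) (labs_ge0 y) ht) _.
  by rewrite /perp /= in hx hy; rewrite hx hy addr0; apply: lrefl.
- move=> a x hx; rewrite /perp /= labs_scale; apply: inf_scale0 => //.
  exact: labs_ge0.
- move=> x y hx _ hyx; apply: lsand; first exact: inf_ge0 (labs_ge0 _) ht.
  apply: ltr (inf_mono _ _ _ _ hyx (lrefl t)) _.
  by rewrite /perp /= in hx; rewrite hx; apply: lrefl.
move=> D s hD [hub hlub].
case: (pselect (exists d, D d)) => [[d0 hd0]|nD]; last first.
  have hs : le s (s - labs s).
    by apply: hlub => d hd; exfalso; apply: nD; exists d.
  have hs0 : labs s = 0.
    apply: lsand; first exact: labs_ge0.
    by apply: lNP; rewrite oppr0; have := lsub0 _ _ hs; rewrite addrAC subrr add0r.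
  by rewrite /perp /= hs0 inf_id.
set P := sup s 0; set Q := sup (- s) 0.
have hsp : le s (sup s t - t).
  apply: hlub => d hd.
  have hdt : le (inf d t) 0.
    apply: ltr (inf_mono _ _ _ _ (labs_ge d) (lrefl t)) _.
    by apply: eqle; apply: hD.
  have h1 : le (d + t) (sup d t).
    apply: lsub0P; apply: lNP; rewrite oppr0; move: hdt; rewrite inf_sup.
    have e : - (sup d t - (d + t)) = d + t - sup d t by rewrite opprB.
    by rewrite e.
  have h2 : le (d + t) (sup s t) by apply: ltr h1 (sup_mono _ _ _ _ (hub d hd) (lrefl t)).
  by apply: (laddrP _ _ t); rewrite subrK.
have hP : le P (sup s t - t).
  by apply: supP => //; apply: lsub0; apply: supr.
have P0 : inf P t = 0.
  apply: lsand; first exact: inf_ge0 (supr s 0) ht.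
  rewrite inf_sup; apply: lsubl0.
  have := laddr _ _ t hP; rewrite subrK => h; apply: ltr h _.
  by apply: sup_mono; [apply: supl|apply: lrefl].
have hQ : le Q (labs d0).
  apply: supP; last exact: labs_ge0.
  by apply: ltr (lN _ _ (hub d0 hd0)) _; apply: labs_geN.
have Q0 : inf Q t = 0.
  apply: lsand; first exact: inf_ge0 (supr _ 0) ht.
  by apply: ltr (inf_mono _ _ _ _ hQ (lrefl t)) _; apply: eqle; apply: hD.
have hPQ : le (labs s) (P + Q).
  apply: supP.
    by apply: ltr (supl s 0) _; apply: laddpos; apply: supr.
  by apply: ltr (supl (- s) 0) _; rewrite addrC; apply: laddpos; apply: supr.
apply: lsand; first exact: inf_ge0 (labs_ge0 s) ht.
apply: ltr (inf_mono _ _ _ _ hPQ (lrefl t)) _.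
apply: ltr (inf_subadd _ _ _ (supr s 0) (supr (- s) 0) ht) _.
by rewrite P0 Q0 addr0; apply: lrefl.
Qed.

Lemma band_sep x z : le 0 x -> band_gen le sup x z -> inf (labs z) x = 0 -> z = 0.
Proof.
move=> hx hz h0.
have hb := perp_band _ (labs_ge0 z).
have hxp : perp (labs z) x by rewrite /perp /= labs_pos // infC.
have := hz _ hb hxp; rewrite /perp /= inf_id; last exact: lrefl.
by move=> hz0; apply: labs_le0; rewrite hz0; apply: lrefl.
Qed.

Hypothesis HB : is_banach_lattice le sup.

Lemma lnorm x y : le (labs x) (labs y) -> `|x| <= `|y|.
Proof. exact: (bl_norm HB). Qed.
Lemma norm_labs w : `|labs w| = `|w|.
Proof.
have e : labs (labs w) = labs w by apply: labs_pos => //; apply: labs_ge0.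
apply/eqP; rewrite eq_le; apply/andP; split; apply: lnorm; rewrite e; exact: lrefl.
Qed.
Lemma norm_mono u v : le 0 u -> le u v -> `|u| <= `|v|.
Proof.
move=> h0 h; apply: lnorm; rewrite !labs_pos //; exact: ltr h0 h.
Qed.

Definition rho x w := `| inf (labs w) x |.

Lemma rho_le x w : le 0 x -> rho x w <= `|w|.
Proof.
move=> hx; rewrite /rho -(norm_labs w); apply: norm_mono.
  by apply: inf_ge0 => //; apply: labs_ge0.
exact: infl.
Qed.
Lemma rhoD x a b : le 0 x -> rho x (a + b) <= rho x a + rho x b.
Proof.
move=> hx; rewrite /rho; apply: le_trans (ler_normD _ _).
apply: norm_mono; first by apply: inf_ge0 => //; apply: labs_ge0.
apply: ltr (inf_mono _ _ _ _ (labsD a b) (lrefl x)) _.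
by apply: inf_subadd => //; apply: labs_ge0.
Qed.
Lemma rhoN x w : rho x (- w) = rho x w.
Proof. by rewrite /rho labsN. Qed.
Lemma rho_solid x y w : le 0 x -> le (labs y) (labs w) -> rho x y <= rho x w.
Proof.
move=> hx h; apply: norm_mono; first by apply: inf_ge0 => //; apply: labs_ge0.
by apply: inf_mono => //; apply: lrefl.
Qed.
Lemma rho0 x : le 0 x -> rho x 0 = 0.
Proof.
move=> hx; rewrite /rho labs_pos ?inf_id ?normr0 //; exact: lrefl.
Qed.

Lemma bg_self x : band_gen le sup x x. Proof. by move=> B _. Qed.
Lemma bg0 x : band_gen le sup x 0. Proof. by move=> B [[]]. Qed.
Lemma bgD x a b : band_gen le sup x a -> band_gen le sup x b -> band_gen le sup x (a + b).
Proof. move=> ha hb B hB hx; case: (hB) => -[_ hD _ _] _; apply: hD; [exact: ha | exact: hb]. Qed.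
Lemma bgZ x (k : R) a : band_gen le sup x a -> band_gen le sup x (k *: a).
Proof. move=> ha B hB hx; case: (hB) => -[_ _ hZ _] _; apply: hZ; exact: ha. Qed.
Lemma bgN x a : band_gen le sup x a -> band_gen le sup x (- a).
Proof. by move=> /(bgZ x (-1) a); rewrite scaleN1r. Qed.
Lemma bgB x a b : band_gen le sup x a -> band_gen le sup x b -> band_gen le sup x (a - b).
Proof. by move=> ha hb; apply: bgD => //; apply: bgN. Qed.
Lemma bg_int x y : le 0 x -> order_interval le 0 x y -> band_gen le sup x y.
Proof.
move=> hx [h0 h1] B hB hxB; case: (hB) => -[_ _ _ hS] _.
apply: (hS x y hxB I); rewrite !labs_pos //.
Qed.

Lemma rho_eq0 x w : le 0 x -> band_gen le sup x w -> rho x w = 0 -> w = 0.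
Proof.
move=> hx hw /normr0_eq0 h; exact: band_sep hx hw h.
Qed.

Definition ball_rho x (e : R) := [set w | band_gen le sup x w /\ rho x w < e].
Definition Nx x : set (set E) :=
  [set V | V `<=` band_gen le sup x /\ exists2 e : R, 0 < e & ball_rho x e `<=` V].

Lemma Nx_ball x (e : R) : 0 < e -> Nx x (ball_rho x e).
Proof. by move=> e0; split; [move=> w []|exists e]. Qed.

Lemma Nx_ls x : le 0 x -> is_locally_solid_on le sup (band_gen le sup x) (Nx x).
Proof.
move=> hx; split; split.
- by move=> U [].
- by split => //; exists 1 => // w [].
- move=> U V [_ [e e0 he]] UV VB; split => //; exists e => //.
  by move=> w /he /UV.
- move=> U V [UB [e e0 he]] [_ [f f0 hf]]; split; first by move=> w [/UB].
  exists (Order.min e f); first by rewrite lt_min e0 f0.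
  move=> w [hw hr]; rewrite lt_min in hr; case/andP: hr => h1 h2.
  by split; [apply: he|apply: hf].
- move=> U [UB [e e0 he]] y hy.
  exists (e / (`|y| + 1)); first by apply: divr_gt0 => //; apply: ltr_wpDl.
  move=> a ha; apply: he; split; first exact: bgZ.
  apply: le_lt_trans (rho_le _ _ hx) _; rewrite normrZ.
  have hy1 : 0 < `|y| + 1 by apply: ltr_wpDl.
  have ee : e / (`|y| + 1) * (`|y| + 1) = e by rewrite divfK // gt_eqF.
  set k := e / (`|y| + 1) in ha ee.
  have k0 : 0 < k by rewrite /k divr_gt0.
  have ny := normr_ge0 y.
  have na := normr_ge0 a.
  nra.
- move=> U [UB [e e0 he]]; exists (ball_rho x (e / 2)).
    by apply: Nx_ball; apply: divr_gt0.
  move=> a b [ha ra] [hb rb]; apply: he; split; first exact: bgD.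
  apply: le_lt_trans (rhoD _ _ _ hx) _; lra.
- move=> U [UB [e e0 he]]; exists (ball_rho x e); first exact: Nx_ball.
  split => //.
  move=> a b [ha ra] hb hba; split => //.
  by apply: le_lt_trans (rho_solid _ _ _ hx hba) _.
- move=> w hw hall; apply: (rho_eq0 x w hx hw).
  apply: small0; first exact: normr_ge0.
  by move=> e e0; have [_ h] := hall _ (Nx_ball x e e0).
Qed.

Lemma Nx_metr x : le 0 x -> metrisable_on (band_gen le sup x) (Nx x).
Proof.
move=> hx; exists (fun p q => rho x (q - p)); split; split.
- by move=> p q _ _; apply: normr_ge0.
- move=> p q hp hq; split; last by move=> ->; rewrite subrr rho0.
  move=> h; have := rho_eq0 x (q - p) hx (bgB _ _ _ hq hp) h.
  by move=> /eqP; rewrite subr_eq0 => /eqP.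
- by move=> p q _ _; rewrite -rhoN opprB.
- move=> a b c _ _ _.
  have -> : c - a = (c - b) + (b - a) by rewrite addrA subrK.
  by rewrite addrC; apply: rhoD.
- move=> p hp U [UB [e e0 he]]; exists e => // q hq hr.
  by apply: he; split => //; apply: bgB.
- move=> p hp e e0; exists (ball_rho x e); first exact: Nx_ball.
  by move=> q hq [].
Qed.

Lemma Nx_compl x : le 0 x -> forall u : nat -> E,
  (forall n, order_interval le 0 x (u n)) -> cauchy_wrt (Nx x) u ->
  exists2 l, order_interval le 0 x l & converges_wrt (Nx x) u l.
Proof.
move=> hx u hu hc.
have hd m n : le (labs (u m - u n)) x.
  have P i j : le (u i - u j) x.
    have := lD _ _ _ _ (proj2 (hu i)) (lN _ _ (proj1 (hu j))).
    by rewrite oppr0 addr0.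
  by apply: supP; [apply: P | rewrite opprB; apply: P].
have hr m n : rho x (u m - u n) = `|u m - u n|.
  by rewrite /rho inf_id // norm_labs.
have [l hl] : exists l, forall e : R, 0 < e ->
    exists n0, forall n, (n0 <= n)%N -> `|l - u n| < e.
  apply: cauchy_lim => e e0.
  have [n0 hn0] := hc _ (Nx_ball x e e0).
  by exists n0 => m n hm hn; have [_] := hn0 m n hm hn; rewrite hr.
have small (y : E) : (forall n, `|y| <= `|l - u n|) -> y = 0.
  move=> hy; apply/normr0_eq0; apply: small0; first exact: normr_ge0.
  move=> e e0; have [n0 hn0] := hl e e0.
  by apply: le_lt_trans (hy n0) _; apply: hn0.
have hl0 : le 0 l.
  have m0 : sup (- l) 0 = 0.
    apply: small => n; rewrite -(norm_labs (l - u n)) -labsN opprB.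
    apply: norm_mono; first exact: supr.
    apply: supP; last exact: labs_ge0.
    apply: ltr (labs_ge (u n - l)); rewrite addrC; apply: laddpos.
    exact: (proj1 (hu n)).
  by apply: lNP; rewrite oppr0 -m0; apply: supl.
have hlx : le l x.
  have m0 : sup (l - x) 0 = 0.
    apply: small => n; rewrite -(norm_labs (l - u n)).
    apply: norm_mono; first exact: supr.
    apply: supP; last exact: labs_ge0.
    apply: ltr (labs_ge (l - u n)); apply: laddl; apply: lN.
    exact: (proj2 (hu n)).
  have := supl (l - x) 0; rewrite m0 => h.
  by have := laddr _ _ x h; rewrite subrK add0r.
have hlB : band_gen le sup x l by apply: bg_int.
exists l; first by split.
move=> U [UB [e e0 he]]; have [n0 hn0] := hl e e0.
exists n0 => n hn; apply: he; split.
  by apply: bgB => //; apply: bg_int.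
by apply: le_lt_trans (rho_le _ _ hx) _; rewrite distrC; apply: hn0.
Qed.

Lemma licss_of N : (forall x, le 0 x -> restr_finer (band_gen le sup x) N (Nx x)) ->
  licss le sup N.
Proof.
move=> hN x hx; exists (Nx x); split.
- exact: Nx_ls.
- exact: Nx_metr.
- exact: hN.
- exact: Nx_compl.
Qed.

Lemma norm_case : licss le sup (@norm_nbhs0 R E).
Proof.
apply: licss_of => x hx V [VB [e e0 he]].
exists [set w | `|w| < e].
  by rewrite /norm_nbhs0 /=; apply/nbhs_norm0P; exists e.
move=> w [hw hB]; apply: he; split => //.
exact: le_lt_trans (rho_le _ _ hx) hw.
Qed.

Lemma un_case : licss le sup (un_nbhs0 sup).
Proof.
apply: licss_of => x hx V [VB [e e0 he]].
exists [set w | `|inf (labs w) (labs x)| < e].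
  by exists e, x; split.
move=> w [hw hB]; apply: he; split => //.
by rewrite /rho -[X in inf _ X](labs_pos x hx).
Qed.

End Lat.

Unset Implicit Arguments.
Theorem proposition3p9 (R : realType) (E : completeNormedModType R)
    (le : E -> E -> Prop) (sup : E -> E -> E) :
  is_banach_lattice le sup ->
  licss le sup (@norm_nbhs0 R E) /\ licss le sup (un_nbhs0 sup).
Proof.
move=> HB; have H := bl_vl HB; split.
- exact: norm_case.
- exact: un_case.
Qed.
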